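(* Let $\psi:\mathbb R\to\mathbb R$ satisfy $-\log(1-x+x^2/2)\leq \psi(x)\leq \log(1+x+x^2/2)$ for all $x\in\mathbb R$. Let $Y\in\mathbb C^{d\times d}$ be a self-adjoint random matrix with finite second moments of entries, let $\theta>0$, and for a (deterministic) self-adjoint $S\in\mathbb C^{d\times d}$ let $X(S):=\psi(\theta(Y-S))$. Then for every self-adjoint $S$, \[ \Big\| S- \mathbb EY + \frac{1}{\theta}\mathbb E X(S) \Big\|\leq \frac{\theta}{2}\left\| \mathbb E(Y - S)^2 \right\|. \]
   Context: $\|\cdot\|$ is the operator norm. For a real function $f$ and a self-adjoint matrix $A=U\,\mathrm{diag}(\lambda_i)\,U^\ast$, $f(A):=U\,\mathrm{diag}(f(\lambda_i))\,U^\ast$. Expectations are entrywise. *)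

(* Defs.v *)
From HB Require Import structures.
From mathcomp Require Import all_boot all_order all_algebra.
From mathcomp Require Import sesquilinear spectral.
From mathcomp Require Import all_classical all_reals all_analysis.
From mathcomp.real_closed Require Import complex.

Set Implicit Arguments. Unset Strict Implicit. Unset Printing Implicit Defensive.
Import Order.TTheory GRing.Theory Num.Theory.
Local Open Scope ring_scope.
Local Open Scope classical_set_scope.

Section Defs.
Variable R : realType.
Local Notation C := (R[i]).

Definition adjmx {m n} (A : 'M[C]_(m, n)) : 'M[C]_(n, m) := (map_mx Num.conj A)^T.

Definition selfadj {d} (A : 'M[C]_d) : Prop := adjmx A = A.

Definition cplx_rV {d} (l : 'rV[R]_d) : 'rV[C]_d := map_mx (fun x => (x%:C)%C) l.

Definition spec_decomp {d} (A : 'M[C]_d) (U : 'M[C]_d) (l : 'rV[R]_d) : Prop :=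
  U \is unitarymx /\ A = U *m diag_mx (cplx_rV l) *m adjmx U.

(** Functional calculus f(A) := U diag(f l_i) U^* for a (chosen) spectral
    decomposition of A (exists whenever A is self-adjoint; the value is
    independent of the decomposition); 0 if no decomposition exists. *)
Definition fcalc {d} (f : R -> R) (A : 'M[C]_d) : 'M[C]_d :=
  match pselect (exists Ul : 'M[C]_d * 'rV[R]_d, spec_decomp A Ul.1 Ul.2) with
  | left h => let Ul := projT1 (cid h) in
              Ul.1 *m diag_mx (cplx_rV (map_mx f Ul.2)) *m adjmx Ul.1
  | right _ => 0
  end.

Definition vnorm {d} (v : 'cV[C]_d) : R :=
  Num.sqrt (\sum_i (complex.Re (v i 0) ^+ 2 + complex.Im (v i 0) ^+ 2)).

Definition opnorm {m n} (A : 'M[C]_(m, n)) : R :=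
  sup [set vnorm (A *m v) | v in [set v : 'cV[C]_n | vnorm v <= 1]].

Definition cexpect {dT} {T : measurableType dT} (P : probability T R)
  (X : T -> C) : C :=
  ((fine ('E_P[fun w => complex.Re (X w)]))%E +i* (fine ('E_P[fun w => complex.Im (X w)]))%E)%C.

Definition mexpect {dT} {T : measurableType dT} (P : probability T R) {m n}
  (X : T -> 'M[C]_(m, n)) : 'M[C]_(m, n) :=
  \matrix_(i, j) cexpect P (fun w => X w i j).

End Defs.

(* Main.v *)
Require Import Defs.
From HB Require Import structures.
From mathcomp Require Import all_boot all_order all_algebra.
From mathcomp Require Import sesquilinear spectral.
From mathcomp Require Import all_classical all_reals all_analysis.
From mathcomp.real_closed Require Import complex.
From mathcomp Require Import ring lra.
Import Order.TTheory GRing.Theory Num.Theory.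
Local Open Scope ring_scope.
Section Lin.
Set Implicit Arguments. Unset Strict Implicit.
Variable R : realType.
Local Notation C := (R[i]).
Local Notation Re := complex.Re.
Local Notation Im := complex.Im.

Lemma adjmxD m n (A B : 'M[C]_(m,n)) : adjmx (A + B) = adjmx A + adjmx B.
Proof. by rewrite /adjmx map_mxD linearD. Qed.
Lemma adjmxN m n (A : 'M[C]_(m,n)) : adjmx (- A) = - adjmx A.
Proof. by apply/matrixP=> i j; rewrite !mxE rmorphN. Qed.
Lemma adjmx_mul m n p (A : 'M[C]_(m,n)) (B : 'M[C]_(n,p)) : adjmx (A *m B) = adjmx B *m adjmx A.
Proof. by rewrite /adjmx map_mxM trmx_mul. Qed.
Lemma adjmxK m n (A : 'M[C]_(m,n)) : adjmx (adjmx A) = A.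
Proof. by apply/matrixP=> i j; rewrite !mxE conjCK. Qed.
Lemma adjmxZ m n c (A : 'M[C]_(m,n)) : adjmx (c *: A) = Num.conj c *: adjmx A.
Proof. by apply/matrixP=> i j; rewrite !mxE rmorphM. Qed.
Lemma adjmxE m n (A : 'M[C]_(m,n)) i j : adjmx A i j = Num.conj (A j i).
Proof. by rewrite !mxE. Qed.
Lemma conjRe (z : C) : Re (Num.conj z) = Re z.
Proof. by case: z. Qed.
Lemma conjIm (z : C) : Im (Num.conj z) = - Im z.
Proof. by case: z. Qed.
Lemma conjreal (x : R) : Num.conj (x%:C)%C = (x%:C)%C.
Proof. exact: (conjc_real x). Qed.
Lemma ReM (x y : C) : Re (x * y) = Re x * Re y - Im x * Im y.
Proof. by case: x => a b; case: y => c e. Qed.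
Lemma ImM (x y : C) : Im (x * y) = Re x * Im y + Im x * Re y.
Proof. by case: x => a b; case: y => c e. Qed.
Lemma ReC (x : R) : Re (x%:C)%C = x. Proof. by []. Qed.
Lemma ImC (x : R) : Im (x%:C)%C = 0. Proof. by []. Qed.
Lemma conjM_self (z : C) : Num.conj z * z = ((Re z ^+ 2 + Im z ^+ 2)%:C)%C.
Proof. by case: z => a b; apply/eqP; rewrite eq_complex /=; apply/andP; split; apply/eqP; ring. Qed.

Variable d : nat.
Implicit Types (u v w : 'cV[C]_d) (A B : 'M[C]_d).

Definition dot u v : C := (adjmx u *m v) 0 0.
Definition nv2 v : R := \sum_i (Re (v i 0) ^+ 2 + Im (v i 0) ^+ 2).

Lemma dotE u v : dot u v = \sum_i Num.conj (u i 0) * v i 0.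
Proof. by rewrite /dot !mxE; apply: eq_bigr => i _; rewrite !mxE. Qed.
Lemma dotDr u v w : dot u (v + w) = dot u v + dot u w.
Proof. by rewrite /dot mulmxDr mxE. Qed.
Lemma dotDl u v w : dot (v + w) u = dot v u + dot w u.
Proof. by rewrite /dot adjmxD mulmxDl mxE. Qed.
Lemma dotNr u v : dot u (- v) = - dot u v.
Proof. by rewrite /dot mulmxN mxE. Qed.
Lemma dotNl u v : dot (- v) u = - dot v u.
Proof. by rewrite /dot adjmxN mulNmx mxE. Qed.
Lemma dotZr u v c : dot u (c *: v) = c * dot u v.
Proof. by rewrite /dot -scalemxAr mxE. Qed.
Lemma dotZl u v c : dot (c *: v) u = Num.conj c * dot v u.
Proof. by rewrite /dot adjmxZ -scalemxAl mxE. Qed.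
Lemma dot_conj u v : Num.conj (dot u v) = dot v u.
Proof. rewrite !dotE rmorph_sum; by apply: eq_bigr => i _; rewrite rmorphM /= conjCK mulrC. Qed.
Lemma dot_mull u A x : dot u (A *m x) = dot (adjmx A *m u) x.
Proof. by rewrite /dot adjmx_mul adjmxK mulmxA. Qed.
Lemma dot_self v : dot v v = ((nv2 v)%:C)%C.
Proof.
rewrite dotE /nv2 rmorph_sum; apply: eq_bigr => i _; exact: conjM_self.
Qed.
Lemma nv2_ge0 v : 0 <= nv2 v.
Proof. by apply: sumr_ge0 => i _; rewrite addr_ge0 // sqr_ge0. Qed.
Lemma Re_dot u v : Re (dot u v) = \sum_i (Re (u i 0) * Re (v i 0) + Im (u i 0) * Im (v i 0)).
Proof.
rewrite dotE raddf_sum; apply: eq_bigr => i _ /=; case: (u i 0) => a b; case: (v i 0) => c e /=; ring. Qed.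
Lemma nv2_eq0 v : nv2 v = 0 -> v = 0.
Proof.
move=> h; apply/matrixP => i j; rewrite ord1 mxE.
have : Re (v i 0) ^+ 2 + Im (v i 0) ^+ 2 = 0.
  apply/eqP; rewrite eq_le; apply/andP; split; last by rewrite addr_ge0 // sqr_ge0.
  rewrite -h /nv2 (bigD1 i) //= lerDl; apply: sumr_ge0 => k _.
  by rewrite addr_ge0 // sqr_ge0.
move/eqP; rewrite paddr_eq0 ?sqr_ge0 // !sqrf_eq0 => /andP[/eqP h1 /eqP h2].
by apply/eqP; rewrite eq_complex /= h1 h2 !eqxx.
Qed.

Definition bf u A v : C := dot u (A *m v).
Definition qf A v : C := bf v A v.

Lemma bfE u A v : bf u A v = \sum_i \sum_j Num.conj (u i 0) * A i j * v j 0.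
Proof.
rewrite /bf dotE; apply: eq_bigr => i _; rewrite mxE mulr_sumr.
by apply: eq_bigr => j _; rewrite mulrA.
Qed.
Lemma bfDm u A B v : bf u (A + B) v = bf u A v + bf u B v.
Proof. by rewrite /bf mulmxDl dotDr. Qed.
Lemma bfNm u A v : bf u (- A) v = - bf u A v.
Proof. by rewrite /bf mulNmx dotNr. Qed.
Lemma bfZm u A v c : bf u (c *: A) v = c * bf u A v.
Proof. by rewrite /bf -scalemxAl dotZr. Qed.
Lemma bfDl u v w A : bf (u + v) A w = bf u A w + bf v A w.
Proof. by rewrite /bf dotDl. Qed.
Lemma bfDr u v w A : bf w A (u + v) = bf w A u + bf w A v.
Proof. by rewrite /bf mulmxDr dotDr. Qed.
Lemma bfNl u v A : bf (- u) A v = - bf u A v.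
Proof. by rewrite /bf dotNl. Qed.
Lemma bfNr u v A : bf u A (- v) = - bf u A v.
Proof. by rewrite /bf mulmxN dotNr. Qed.
Lemma bfZl u v A c : bf (c *: u) A v = Num.conj c * bf u A v.
Proof. by rewrite /bf dotZl. Qed.
Lemma bfZr u v A c : bf u A (c *: v) = c * bf u A v.
Proof. by rewrite /bf -scalemxAr dotZr. Qed.
Lemma bf_conj u A v : Num.conj (bf u A v) = bf v (adjmx A) u.
Proof. by rewrite /bf dot_conj dot_mull adjmxK. Qed.
Lemma bf_conjmx u v U D : bf u (U *m D *m adjmx U) v = bf (adjmx U *m u) D (adjmx U *m v).
Proof. by rewrite /bf -!mulmxA dot_mull. Qed.
Lemma bf_diag w (r : 'rV[C]_d) : bf w (diag_mx r) w = \sum_i Num.conj (w i 0) * (r 0 i * w i 0).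
Proof. by rewrite /bf mul_diag_mx dotE; apply: eq_bigr => i _; rewrite mxE. Qed.
Lemma bf_delta A i j : bf (delta_mx i 0) A (delta_mx j 0) = A i j.
Proof.
rewrite bfE (bigD1 i) //= (bigD1 j) //= !mxE !eqxx /= conjC1 !mulr1 mul1r.
rewrite big1 ?addr0; last by move=> k /negbTE kj; rewrite !mxE kj /= mulr0.
rewrite big1 ?addr0 // => k /negbTE ki; rewrite big1 // => l _.
by rewrite !mxE ki /= conjC0 !mul0r.
Qed.

Lemma adj_diag (l : 'rV[R]_d) : adjmx (diag_mx (cplx_rV l)) = diag_mx (cplx_rV l).
Proof.
apply/matrixP => i j; rewrite !mxE eq_sym; case: eqP => [->|_]; rewrite /= ?mulr1n ?mulr0n.
  by rewrite conjreal. by rewrite conjC0.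
Qed.

Lemma diag_sq (l : 'rV[R]_d) : diag_mx (cplx_rV l) *m diag_mx (cplx_rV l)
  = diag_mx (cplx_rV (map_mx (fun x => x ^+ 2) l)).
Proof.
rewrite mul_diag_mx; apply/matrixP => i j; rewrite !mxE.
case: eqP => [->|_]; rewrite ?mulr1n ?mulr0n ?mulr0 //.
by rewrite rmorphXn.
Qed.

Lemma qf_decomp U (l : 'rV[R]_d) v :
  qf (U *m diag_mx (cplx_rV l) *m adjmx U) v =
  ((\sum_i l 0 i * (Re ((adjmx U *m v) i 0) ^+ 2 + Im ((adjmx U *m v) i 0) ^+ 2))%:C)%C.
Proof.
rewrite /qf bf_conjmx bf_diag rmorph_sum; apply: eq_bigr => i _.
rewrite /cplx_rV !mxE mulrCA conjM_self /=.
move: (Re _) (Im _) (l 0 i) => a b c.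
by apply/eqP; rewrite eq_complex /=; apply/andP; split; apply/eqP; ring.
Qed.

Lemma selfadj_herm (A : 'M[C]_d) : selfadj A -> A \is hermsymmx.
Proof.
move=> H; rewrite is_hermitianmxE expr0 scale1r; apply/eqP.
by rewrite -{1}H; apply/matrixP => i j; rewrite !mxE.
Qed.

Lemma unitary_adj (U : 'M[C]_d) : U \is unitarymx -> adjmx U *m U = 1%:M.
Proof.
move=> /unitarymxP h; apply: mulmx1C; rewrite -[RHS]h; congr (_ *m _).
by apply/matrixP => i j; rewrite !mxE.
Qed.

Lemma spec_exists (A : 'M[C]_d) : selfadj A -> exists Ul : 'M[C]_d * 'rV[R]_d, spec_decomp A Ul.1 Ul.2.
Proof.
move=> H; have hA := selfadj_herm H.
have /orthomx_spectralP eA := hermitian_normalmx hA.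
have rl := hermitian_spectral_diag_real hA.
set P := spectralmx A in eA; set sp := spectral_diag A in eA rl.
have Pu : P \is unitarymx by apply: spectral_unitarymx.
exists (adjmx P, map_mx (@complex.Re R) sp) => /=; split.
  have -> : adjmx P = (P ^t* )%sesqui by apply/matrixP => i j; rewrite !mxE.
  by rewrite trmxC_unitary.
rewrite adjmxK [LHS]eA (invmx_unitary Pu); congr (_ *m _ *m _).
  by apply/matrixP => i j; rewrite !mxE.
congr diag_mx; apply/matrixP => i j; rewrite !mxE.
by rewrite RRe_real //; move/mxOverP: rl; apply.
Qed.

Lemma fcalcE f (A : 'M[C]_d) : selfadj A -> exists U (l : 'rV[R]_d), spec_decomp A U l /\
  fcalc f A = U *m diag_mx (cplx_rV (map_mx f l)) *m adjmx U.
Proof.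
move=> /spec_exists h; rewrite /fcalc; case: pselect => // h'.
case: (cid h') => [[U l] /= H]; by exists U, l.
Qed.

Lemma AA_decomp (U : 'M[C]_d) (l : 'rV[R]_d) : U \is unitarymx ->
  (U *m diag_mx (cplx_rV l) *m adjmx U) *m (U *m diag_mx (cplx_rV l) *m adjmx U) =
  U *m diag_mx (cplx_rV (map_mx (fun x => x ^+ 2) l)) *m adjmx U.
Proof.
move=> Uu; rewrite -diag_sq -!mulmxA; congr (_ *m (_ *m _)).
by rewrite mulmxA unitary_adj // mul1mx.
Qed.

Lemma pw f (A : 'M[C]_d) v : selfadj A ->
  (forall x, x - x ^+ 2 / 2 <= f x <= x + x ^+ 2 / 2) ->
  [/\ Im (qf (fcalc f A) v) = 0, adjmx (fcalc f A) = fcalc f A,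
    Re (qf A v) - Re (qf (A *m A) v) / 2 <= Re (qf (fcalc f A) v) &
    Re (qf (fcalc f A) v) <= Re (qf A v) + Re (qf (A *m A) v) / 2].
Proof.
move=> hA hf; have [U [l [[Uu eA] ->]]] := fcalcE f hA.
rewrite eA AA_decomp // !qf_decomp /=; split.
- by [].
- by rewrite !adjmx_mul adjmxK adj_diag mulmxA.
- rewrite mulr_suml -sumrB; apply: ler_sum => i _; rewrite !mxE.
  have := addr_ge0 (sqr_ge0 (Re ((adjmx U *m v) i 0))) (sqr_ge0 (Im ((adjmx U *m v) i 0))).
  move: (_ + _) => n n0; have := hf (l 0 i); move: (l 0 i) (f _) => x y /andP[h1 h2]; nra.
- rewrite mulr_suml -big_split; apply: ler_sum => i _; rewrite !mxE /=.
  have := addr_ge0 (sqr_ge0 (Re ((adjmx U *m v) i 0))) (sqr_ge0 (Im ((adjmx U *m v) i 0))).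
  move: (_ + _) => n n0; have := hf (l 0 i); move: (l 0 i) (f _) => x y /andP[h1 h2]; nra.
Qed.
End Lin.

Lemma psi_bounds (R : realType) (psi : R -> R) :
  (forall x : R, - ln (1 - x + x ^+ 2 / 2) <= psi x /\ psi x <= ln (1 + x + x ^+ 2 / 2)) ->
  forall x, x - x ^+ 2 / 2 <= psi x <= x + x ^+ 2 / 2.
Proof.
move=> h x; have lnle : forall y : R, 0 < y -> ln y <= y - 1.
  by move=> y y0; have := expR_ge1Dx (ln y); rewrite lnK ?posrE // => H; lra.
have [h1 h2] := h x; apply/andP; split.
- have p : 0 < 1 - x + x ^+ 2 / 2 by nra.
  have := lnle _ p; lra.
- have p : 0 < 1 + x + x ^+ 2 / 2 by nra.
  have := lnle _ p; lra.
Qed.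

From mathcomp Require Import measurable_realfun.
Section Exp.
Set Implicit Arguments. Unset Strict Implicit.
Variables (R : realType) (dT : measure_display) (T : measurableType dT) (P : probability T R).

Definition Meas (f : T -> R) := measurable_fun setT f.
Definition Int (f : T -> R) := P.-integrable setT (EFin \o f).
Definition Ef (f : T -> R) : R := fine ('E_P[f])%E.

Lemma Int_meas f : Int f -> Meas f.
Proof. by move=> /(measurable_int P) /measurable_EFinP. Qed.

Lemma IntD f g : Int f -> Int g -> Int (fun w => f w + g w).
Proof. by move=> hf hg; apply: eq_integrable (integrableD _ hf hg) => // x _. Qed.

Lemma IntZ k f : Int f -> Int (fun w => k * f w).
Proof. by move=> hf; apply: eq_integrable (integrableZl _ k hf) => // x _. Qed.

Lemma IntN f : Int f -> Int (fun w => - f w).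
Proof. by move=> hf; apply: eq_integrable (integrableN hf) => // x _. Qed.

Lemma IntB f g : Int f -> Int g -> Int (fun w => f w - g w).
Proof. by move=> hf hg; apply: IntD => //; apply: IntN. Qed.

Lemma Int_cst c : Int (fun _ => c).
Proof. exact: finite_measure_integrable_cst. Qed.

Lemma Int_sum (I : Type) (r : seq I) (F : I -> T -> R) :
  (forall i, Int (F i)) -> Int (fun w => \sum_(i <- r) F i w).
Proof.
move=> h; elim: r => [|i r ih].
  by apply: eq_integrable (Int_cst 0) => // x _ /=; rewrite big_nil.
by apply: eq_integrable (IntD (h i) ih) => // x _ /=; rewrite big_cons.
Qed.

Lemma Int_ext f g : (forall w, f w = g w) -> Int f -> Int g.
Proof. by move=> e hf; apply: eq_integrable hf => // x _ /=; rewrite e. Qed.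

Lemma Int_abs f : Int f -> Int (fun w => `|f w|).
Proof. by move=> hf; apply: eq_integrable (integrable_abse hf) => // x _. Qed.

Lemma Int_dom f h : Meas f -> Int h -> (forall w, `|f w| <= h w) -> Int f.
Proof.
move=> mf ih hb; apply: (le_integrable measurableT _ _ ih).
  exact/measurable_EFinP.
move=> x _ /=; rewrite lee_fin (le_trans (hb x)) //; exact: ler_norm.
Qed.

Lemma Int_sand f g1 g2 : Meas f -> Int g1 -> Int g2 ->
  (forall w, g1 w <= f w <= g2 w) -> Int f.
Proof.
move=> mf i1 i2 hb; apply: (Int_dom mf (IntD (Int_abs i1) (Int_abs i2))) => w.
have /andP[h1 h2] := hb w; have a1 := ler_norm (g2 w).
have a2 : - g1 w <= `|g1 w| by rewrite -normrN ler_norm.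
have b1 := normr_ge0 (g1 w); have b2 := normr_ge0 (g2 w).
rewrite ler_norml; apply/andP; split; lra.
Qed.

Lemma Ef_fin f : Int f -> ('E_P[f])%E \is a fin_num.
Proof. by move=> hf; rewrite unlock; exact: integrable_fin_num. Qed.

Lemma EfD f g : Int f -> Int g -> Ef (fun w => f w + g w) = Ef f + Ef g.
Proof.
move=> hf hg; rewrite /Ef.
have -> : ('E_P[fun w => (f w + g w)%R] = 'E_P[f] + 'E_P[g])%E.
  by rewrite unlock; exact: (integralD_EFin _ hf hg).
by rewrite fineD //; apply: Ef_fin.
Qed.

Lemma EfZ k f : Int f -> Ef (fun w => k * f w) = k * Ef f.
Proof.
move=> hf; rewrite /Ef.
have -> : ('E_P[fun w => (k * f w)%R] = k%:E * 'E_P[f])%E.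
  by rewrite unlock -(integralZl measurableT hf k).
by rewrite fineM //; apply: Ef_fin.
Qed.

Lemma EfN f : Int f -> Ef (fun w => - f w) = - Ef f.
Proof.
move=> hf; have := EfZ (-1) hf; under eq_fun do rewrite mulN1r; by rewrite mulN1r.
Qed.

Lemma EfB f g : Int f -> Int g -> Ef (fun w => f w - g w) = Ef f - Ef g.
Proof. by move=> hf hg; rewrite (EfD hf (IntN hg)) EfN. Qed.

Lemma Ef_cst c : Ef (fun _ => c) = c.
Proof. by rewrite /Ef (expectation_cst P c). Qed.

Lemma Ef_le f g : Int f -> Int g -> (forall w, f w <= g w) -> Ef f <= Ef g.
Proof.
move=> hf hg h; rewrite /Ef fine_le ?Ef_fin //.
by rewrite unlock; apply: le_integral => // x _; rewrite lee_fin.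
Qed.

Lemma Ef_ext f g : (forall w, f w = g w) -> Ef f = Ef g.
Proof. by move=> e; have -> : f = g by apply: funext. Qed.

Lemma Ef_sum (I : Type) (r : seq I) (F : I -> T -> R) :
  (forall i, Int (F i)) -> Ef (fun w => \sum_(i <- r) F i w) = \sum_(i <- r) Ef (F i).
Proof.
move=> h; elim: r => [|i r ih].
  rewrite big_nil (@Ef_ext _ (fun _ => 0)) ?Ef_cst // => w; by rewrite big_nil.
rewrite big_cons -ih -EfD //; last exact: Int_sum.
by apply: Ef_ext => w; rewrite big_cons.
Qed.

Definition L2 f := Meas f /\ Int (fun w => f w ^+ 2).

Lemma L2_Int f : L2 f -> Int f.
Proof.
move=> [mf i2]; apply: (Int_dom mf (IntD (Int_cst 1) i2)) => w.
rewrite -(real_normK (num_real (f w))); move: `|f w| => a; nra.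
Qed.

Lemma L2_mul f g : L2 f -> L2 g -> Int (fun w => f w * g w).
Proof.
move=> [mf i1] [mg i2]; apply: (Int_dom _ (IntD i1 i2)).
  exact: measurable_funM.
move=> w; rewrite normrM -(real_normK (num_real (f w))) -(real_normK (num_real (g w))).
move: `|f w| `|g w| => a b; nra.
Qed.

Lemma L2D f g : L2 f -> L2 g -> L2 (fun w => f w + g w).
Proof.
move=> [mf i1] [mg i2]; split; first exact: measurable_funD.
apply: (Int_dom _ (IntZ 2 (IntD i1 i2))).
  by apply: measurable_funX; exact: measurable_funD.
move=> w; rewrite ger0_norm ?sqr_ge0 //; move: (f w) (g w) => a b; have := sqr_ge0 (a - b); rewrite !expr2; nra.
Qed.

Lemma L2Z k f : L2 f -> L2 (fun w => k * f w).
Proof.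
move=> [mf i1]; split; first by apply: measurable_funM => //; exact: measurable_cst.
by apply: Int_ext (IntZ (k ^+ 2) i1) => w; rewrite exprMn.
Qed.

Lemma L2_cst c : L2 (fun _ => c).
Proof. split; [exact: measurable_cst | exact: Int_cst]. Qed.

Lemma L2B f g : L2 f -> L2 g -> L2 (fun w => f w - g w).
Proof.
move=> hf hg; have := L2D hf (L2Z (-1) hg).
by case=> m i; split; [apply: eq_measurable_fun m => x _ | apply: Int_ext i => x]; rewrite mulN1r.
Qed.
End Exp.
Section Norm.
Set Implicit Arguments. Unset Strict Implicit.
Variable R : realType.
Local Notation C := (R[i]).
Local Notation Re := complex.Re.
Local Notation Im := complex.Im.
Variable d : nat.
Implicit Types (u v w x : 'cV[C]_d) (A B : 'M[C]_d).

Lemma nv2Z (s : R) v : nv2 ((s%:C)%C *: v) = s ^+ 2 * nv2 v.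
Proof.
rewrite /nv2 mulr_sumr; apply: eq_bigr => i _; rewrite !mxE /=.
by case: (v i 0) => a b /=; ring.
Qed.

Lemma nv2N v : nv2 (- v) = nv2 v.
Proof. by rewrite /nv2; apply: eq_bigr => i _; rewrite !mxE; case: (v i 0) => a b /=; ring. Qed.

Lemma Re_dot_sym u v : Re (dot u v) = Re (dot v u).
Proof. by rewrite -dot_conj conjRe. Qed.

Lemma amgm u v : 2 * Re (dot u v) <= nv2 u + nv2 v.
Proof.
rewrite Re_dot /nv2 mulr_sumr -big_split; apply: ler_sum => i _ /=.
move: (Re (u i 0)) (Im (u i 0)) (Re (v i 0)) (Im (v i 0)) => a b c e.
have := sqr_ge0 (a - c); have := sqr_ge0 (b - e); rewrite !expr2; nra.
Qed.

Lemma parallel u v : nv2 (u + v) + nv2 (u - v) = 2 * nv2 u + 2 * nv2 v.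
Proof.
rewrite /nv2 !mulr_sumr -!big_split; apply: eq_bigr => i _ /=; rewrite !mxE.
by case: (u i 0) => a b; case: (v i 0) => c e /=; ring.
Qed.

Lemma amgm_s (s : R) u v : 0 < s -> 2 * Re (dot u v) <= s ^+ 2 * nv2 u + s ^-2 * nv2 v.
Proof.
move=> s0; have := amgm ((s%:C)%C *: u) ((s^-1%:C)%C *: v).
rewrite !nv2Z dotZl dotZr conjreal mulrA -rmorphM mulfV ?gt_eqF // mul1r.
by rewrite exprVn.
Qed.

Lemma nv2_le1 v : vnorm v <= 1 -> nv2 v <= 1.
Proof.
rewrite /vnorm -/(nv2 v) => h; have := nv2_ge0 v; move=> n0.
by rewrite -(sqr_sqrtr n0) -(expr1n _ 2) lerXn2r // ?nnegrE ?sqrtr_ge0.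
Qed.

Lemma vnorm_nv2 v : vnorm v ^+ 2 = nv2 v.
Proof. by rewrite /vnorm -/(nv2 v) sqr_sqrtr // nv2_ge0. Qed.

Lemma vnorm_ge0 v : 0 <= vnorm v.
Proof. exact: sqrtr_ge0. Qed.

Lemma coord_le v i : Re (v i 0) ^+ 2 + Im (v i 0) ^+ 2 <= nv2 v.
Proof.
rewrite /nv2 (bigD1 i) //= lerDl; apply: sumr_ge0 => k _.
by rewrite addr_ge0 // sqr_ge0.
Qed.

(* a crude bound showing the opnorm set is bounded *)
Definition crude A : R := \sum_i \sum_j (`|Re (A i j)| + `|Im (A i j)|).

Lemma Re_qf_expand A v : Re (qf A v) =
  \sum_i \sum_j (Re (Num.conj (v i 0) * v j 0) * Re (A i j) - Im (Num.conj (v i 0) * v j 0) * Im (A i j)).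
Proof.
rewrite /qf bfE raddf_sum; apply: eq_bigr => i _; rewrite raddf_sum; apply: eq_bigr => j _ /=.
rewrite mulrAC; move: (Num.conj _ * _) (A i j) => a b.
by case: a => a1 a2; case: b => b1 b2.
Qed.

Lemma qf_crude A v : nv2 v <= 1 -> `|Re (qf A v)| <= crude A.
Proof.
move=> h; rewrite Re_qf_expand /crude; apply: le_trans (ler_norm_sum _ _ _) _.
apply: ler_sum => i _; apply: le_trans (ler_norm_sum _ _ _) _; apply: ler_sum => j _.
have hi := coord_le v i; have hj := coord_le v j.
rewrite !(ReM, ImM) conjRe conjIm.
move: (Re (v i 0)) (Im (v i 0)) (Re (v j 0)) (Im (v j 0)) hi hj => a b c e hi hj.
move: (Re (A i j)) (Im (A i j)) => x y.
have h1 : `|(a * c - - b * e)| <= 1.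
  rewrite ler_norml; apply/andP; split;
  have := sqr_ge0 (a - c); have := sqr_ge0 (b - e); have := sqr_ge0 (a + c); have := sqr_ge0 (b + e);
  rewrite !expr2 in hi hj *; nra.
have h2 : `|(a * e + - b * c)| <= 1.
  rewrite ler_norml; apply/andP; split;
  have := sqr_ge0 (a - e); have := sqr_ge0 (b - c); have := sqr_ge0 (a + e); have := sqr_ge0 (b + c);
  rewrite !expr2 in hi hj *; nra.
apply: le_trans (ler_normB _ _) _; rewrite !normrM.
apply: lerD; rewrite -[X in _ <= X]mul1r ler_wpM2r //.
Qed.

Lemma nv2_qf A v : nv2 (A *m v) = Re (qf (adjmx A *m A) v).
Proof.
by rewrite /qf /bf -mulmxA dot_mull adjmxK dot_self.
Qed.

Local Open Scope classical_set_scope.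
Definition oset A := [set vnorm (A *m v) | v in [set v : 'cV[C]_d | vnorm v <= 1]].

Lemma oset_ub A : has_ubound (oset A).
Proof.
exists (1 + crude (adjmx A *m A)) => _ [v hv <-].
have h := nv2_le1 hv; rewrite /vnorm -/(nv2 (A *m v)) nv2_qf.
have := qf_crude (adjmx A *m A) h; set q := Re _ => hq.
have q0 : 0 <= q by rewrite /q -nv2_qf nv2_ge0.
have hq' : q <= crude (adjmx A *m A) by apply: le_trans (ler_norm _) hq.
case: (lerP q 1) => q1.
  have : Num.sqrt q <= 1 by rewrite -sqrtr1 ler_sqrt.
  have := normr_ge0 (Re (qf (adjmx A *m A) v)); lra.
have : Num.sqrt q <= q.
  rewrite -{2}(sqr_sqrtr q0) expr2 ler_peMl ?sqrtr_ge0 // -sqrtr1 ler_sqrt //; lra.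
lra.
Qed.

Lemma opnorm_ub A v : vnorm v <= 1 -> vnorm (A *m v) <= opnorm A.
Proof. by move=> h; apply: ub_le_sup (oset_ub A) _ _; exists v. Qed.

Lemma vnorm0 : vnorm (0 : 'cV[C]_d) = 0.
Proof. rewrite /vnorm big1 ?sqrtr0 // => i _; rewrite mxE /= expr0n /= addr0 //. Qed.

Lemma opnorm_ge0 A : 0 <= opnorm A.
Proof. by have := @opnorm_ub A 0; rewrite mulmx0 vnorm0; apply; exact: ler01. Qed.

Lemma opnorm_le A (K : R) : (forall v, vnorm v <= 1 -> vnorm (A *m v) <= K) -> opnorm A <= K.
Proof.
move=> h; apply: ge_sup; first by exists (vnorm (A *m 0)), 0 => //=; rewrite vnorm0 ler01.
by move=> _ [v hv <-]; apply: h.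
Qed.
End Norm.
Section Final.
Set Implicit Arguments. Unset Strict Implicit.
Variable R : realType.
Local Notation C := (R[i]).
Local Notation Re := complex.Re.
Local Notation Im := complex.Im.
Variable d : nat.
Implicit Types (u v w x : 'cV[C]_d) (A B : 'M[C]_d).

Lemma nv20 : nv2 (0 : 'cV[C]_d) = 0.
Proof. by rewrite -vnorm_nv2 vnorm0 expr0n. Qed.

Lemma vnorm_gt0 x : nv2 x != 0 -> 0 < vnorm x.
Proof. move=> h; rewrite /vnorm sqrtr_gt0 lt_def h; exact: nv2_ge0. Qed.

Lemma op_scale A x : nv2 (A *m x) <= opnorm A ^+ 2 * nv2 x.
Proof.
have [h|h] := eqVneq (nv2 x) 0.
  by rewrite h mulr0 (nv2_eq0 h) mulmx0 nv20.
have r0 := vnorm_gt0 h; set r := vnorm x in r0.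
have hy : vnorm (((r^-1)%:C)%C *: x) <= 1.
  rewrite /vnorm -/(nv2 _) nv2Z -vnorm_nv2 -/r exprVn mulVf ?sqrtr1 //.
  by rewrite expf_neq0 // gt_eqF.
have := opnorm_ub A hy; rewrite -scalemxAr => h1.
have h2 : nv2 (((r^-1)%:C)%C *: (A *m x)) <= opnorm A ^+ 2.
  rewrite -vnorm_nv2 lerXn2r // ?nnegrE ?vnorm_ge0 ?opnorm_ge0 //.
move: h2; rewrite nv2Z exprVn -vnorm_nv2 -/r.
rewrite -(ler_pM2l (exprn_gt0 2 r0)) mulrA mulfV ?mul1r; last by rewrite expf_neq0 // gt_eqF.
by rewrite [r ^+ 2]vnorm_nv2 mulrC.
Qed.

Lemma dot0r u : dot u (0 : 'cV[C]_d) = 0.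
Proof. by rewrite /dot mulmx0 mxE. Qed.

Lemma qf_le A x : Re (qf A x) <= opnorm A * nv2 x.
Proof.
have m0 := opnorm_ge0 A; set m := opnorm A in m0 *.
have hs := op_scale A x; rewrite -/m in hs.
have [m00|mp] := eqVneq m 0.
  move: hs; rewrite m00 expr0n /= mul0r => hs.
  have e : nv2 (A *m x) = 0 by apply/eqP; rewrite eq_le hs nv2_ge0.
  by rewrite /qf /bf (nv2_eq0 e) dot0r; exact: lexx.
have mpos : 0 < m by rewrite lt_def mp.
have sp : 0 < Num.sqrt m by rewrite sqrtr_gt0.
have := amgm_s x (A *m x) sp; rewrite !sqr_sqrtr //.
rewrite /qf /bf => h1.
have h2 : m^-1 * nv2 (A *m x) <= m * nv2 x.
  rewrite -(ler_pM2l mpos) mulrA mulfV ?mul1r ?gt_eqF //.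
  by rewrite mulrA -expr2.
have := nv2_ge0 x; lra.
Qed.

Lemma polar (Z : 'M[C]_d) (a b : 'cV[C]_d) : adjmx Z = Z ->
  4 * Re (bf a Z b) = Re (qf Z (a + b)) - Re (qf Z (a - b)).
Proof.
move=> hZ; rewrite /qf !(bfDl, bfDr) !(bfNl, bfNr) opprK.
have e : Re (bf b Z a) = Re (bf a Z b) by rewrite -conjRe bf_conj hZ.
rewrite !raddfD /= !raddfN /= e; lra.
Qed.

Lemma final_det (Z Mx : 'M[C]_d) (c : R) : 0 <= c -> adjmx Z = Z ->
  (forall x, `|Re (qf Z x)| <= c * Re (qf Mx x)) -> opnorm Z <= c * opnorm Mx.
Proof.
move=> c0 hZ hq; have m0 := opnorm_ge0 Mx; set m := opnorm Mx in m0 *.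
have hq2 : forall x, `|Re (qf Z x)| <= c * (m * nv2 x).
  by move=> x; apply: le_trans (hq x) _; apply: ler_wpM2l => //; exact: qf_le.
apply: opnorm_le => v hv.
set z := Z *m v.
have [e|ne] := eqVneq (nv2 z) 0.
  by rewrite /vnorm -/(nv2 z) e sqrtr0; exact: mulr_ge0.
have r0 := vnorm_gt0 ne; set r := vnorm z in r0 *.
have hv2 := nv2_le1 hv.
have sp : 0 < Num.sqrt r by rewrite sqrtr_gt0.
set s := Num.sqrt r in sp.
have s2 : s ^+ 2 = r by rewrite sqr_sqrtr // ltW.
set a := ((s^-1)%:C)%C *: z; set b := ((s)%:C)%C *: v.
have eab : bf a Z b = bf z Z v.
  rewrite /a /b bfZl bfZr conjreal mulrA -rmorphM mulVf ?gt_eqF //.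
  by rewrite rmorph1 mul1r.
have ez : Re (bf z Z v) = r ^+ 2 by rewrite /bf -/z dot_self vnorm_nv2.
have hp := polar a b hZ; rewrite eab ez in hp.
have h1 := hq2 (a + b); have h2 := hq2 (a - b).
have h3 : 4 * r ^+ 2 <= c * (m * (nv2 (a + b) + nv2 (a - b))).
  rewrite hp; move: h1 h2; rewrite !mulrDr ler_norml => /andP[_ h1].
  rewrite ler_norml => /andP[h2 _]; lra.
have na : nv2 a = r.
  rewrite /a nv2Z exprVn s2 -vnorm_nv2 -/r expr2 mulrA mulVf ?mul1r // gt_eqF //.
have nb : nv2 b = r * nv2 v by rewrite /b nv2Z s2.
rewrite parallel na nb in h3.
have h4 : c * (m * (2 * r + 2 * (r * nv2 v))) <= c * (m * (4 * r)).
  apply: ler_wpM2l => //; apply: ler_wpM2l => //.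
  have := nv2_ge0 v; nra.
have h5 : r * r <= (c * m) * r.
  have := le_trans h3 h4; rewrite expr2; lra.
by rewrite -(ler_pM2r r0).
Qed.
End Final.
Section Conn.
Set Implicit Arguments. Unset Strict Implicit.
Variables (R : realType) (dT : measure_display) (T : measurableType dT) (P : probability T R).
Local Notation C := (R[i]).
Local Notation Re := complex.Re.
Local Notation Im := complex.Im.
Variable d : nat.

Definition IntM (X : T -> 'M[C]_d) := forall i j,
  Int P (fun w => Re (X w i j)) /\ Int P (fun w => Im (X w i j)).
Definition MeasM (X : T -> 'M[C]_d) := forall i j,
  Meas (fun w => Re (X w i j)) /\ Meas (fun w => Im (X w i j)).

Lemma Re_mexpect (X : T -> 'M[C]_d) i j : Re (mexpect P X i j) = Ef P (fun w => Re (X w i j)).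
Proof. by rewrite mxE. Qed.
Lemma Im_mexpect (X : T -> 'M[C]_d) i j : Im (mexpect P X i j) = Ef P (fun w => Im (X w i j)).
Proof. by rewrite mxE. Qed.

Lemma Int_Req (X : T -> 'M[C]_d) v : IntM X -> Int P (fun w => Re (qf (X w) v)).
Proof.
move=> h; apply: (Int_ext (fun w => esym (Re_qf_expand (X w) v))).
apply: Int_sum => i; apply: Int_sum => j; have [h1 h2] := h i j.
by apply: IntB; apply: IntZ.
Qed.

Lemma MeasZ (k : R) (f : T -> R) : Meas f -> Meas (fun w => k * f w).
Proof. by move=> mf; apply: measurable_funM => //; exact: measurable_cst. Qed.

Lemma Meas_Req (X : T -> 'M[C]_d) v : MeasM X -> Meas (fun w => Re (qf (X w) v)).
Proof.
move=> h; have -> : (fun w => Re (qf (X w) v)) = (fun w => \sum_i \sum_j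
  (Re (Num.conj (v i 0) * v j 0) * Re (X w i j) - Im (Num.conj (v i 0) * v j 0) * Im (X w i j))).
  by apply: funext => w; rewrite Re_qf_expand.
apply: measurable_sum => i; apply: measurable_sum => j; have [h1 h2] := h i j.
by apply: measurable_funB; apply: MeasZ.
Qed.

Lemma Re_qf_E (X : T -> 'M[C]_d) v : IntM X ->
  Re (qf (mexpect P X) v) = Ef P (fun w => Re (qf (X w) v)).
Proof.
move=> h; rewrite Re_qf_expand (Ef_ext _ (fun w => Re_qf_expand (X w) v)).
rewrite Ef_sum; last first.
  move=> i; apply: Int_sum => j; have [h1 h2] := h i j; by apply: IntB; apply: IntZ.
apply: eq_bigr => i _; rewrite Ef_sum; last first.
  move=> j; have [h1 h2] := h i j; by apply: IntB; apply: IntZ.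
apply: eq_bigr => j _; have [h1 h2] := h i j.
by rewrite EfB ?EfZ ?Re_mexpect ?Im_mexpect //; apply: IntZ.
Qed.

Lemma adj_mexpect (X : T -> 'M[C]_d) : IntM X -> (forall w, adjmx (X w) = X w) ->
  adjmx (mexpect P X) = mexpect P X.
Proof.
move=> h hX; apply/matrixP => i j; rewrite adjmxE.
have e : forall w, X w i j = Num.conj (X w j i) by move=> w; rewrite -adjmxE hX.
have [_ h2] := h j i.
apply/eqP; rewrite eq_complex; apply/andP; split; apply/eqP.
  rewrite conjRe !Re_mexpect; apply: Ef_ext => w; by rewrite e conjRe.
rewrite conjIm !Im_mexpect -EfN //; apply: Ef_ext => w; by rewrite e conjIm.
Qed.

Definition ee (k : 'I_d) : 'cV[C]_d := delta_mx k 0.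

Lemma polar_entry (X : 'M[C]_d) i j : adjmx X = X ->
  Re (X i j) = (Re (qf X (ee i + ee j)) - Re (qf X (ee i)) - Re (qf X (ee j))) / 2 /\
  Im (X i j) = - (Re (qf X (ee i + ('i%C) *: ee j)) - Re (qf X (ee i)) - Re (qf X (ee j))) / 2.
Proof.
move=> hX; have e : X j i = Num.conj (X i j) by rewrite -adjmxE hX.
rewrite /qf !(bfDl, bfDr) !(bfZl, bfZr) /ee !bf_delta e.
case: (X i j) => a b; case: (X i i) => c1 c2; case: (X j j) => e1 e2 /=.
split; lra.
Qed.

Lemma IntM_from_qf (F : T -> 'M[C]_d) : (forall w, adjmx (F w) = F w) ->
  (forall v, Int P (fun w => Re (qf (F w) v))) -> IntM F.
Proof.
move=> hF hq i j; split.
  apply: (Int_ext (fun w => esym (proj1 (polar_entry i j (hF w))))).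
  apply: (Int_ext (g := fun w => (Re (qf (F w) (ee i + ee j)) - Re (qf (F w) (ee i)) - Re (qf (F w) (ee j))) * 2^-1)) => //.
  apply: (Int_ext (f := fun w => 2^-1 * (Re (qf (F w) (ee i + ee j)) - Re (qf (F w) (ee i)) - Re (qf (F w) (ee j))))).
    by move=> w; rewrite mulrC.
  by apply: IntZ; apply: IntB; [apply: IntB|].
apply: (Int_ext (fun w => esym (proj2 (polar_entry i j (hF w))))).
apply: (Int_ext (f := fun w => (- 2^-1) * (Re (qf (F w) (ee i + ('i%C) *: ee j)) - Re (qf (F w) (ee i)) - Re (qf (F w) (ee j))))).
  by move=> w; rewrite mulrC mulNr mulrN.
by apply: IntZ; apply: IntB; [apply: IntB|].
Qed.
End Conn.

Section Aux.
Variable R : realType.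
Local Notation C := (R[i]).
Local Notation Re := complex.Re.
Local Notation Im := complex.Im.

Lemma ReCM (t : R) (z : C) : Re ((t%:C)%C * z) = t * Re z.
Proof. by case: z => a b /=; ring. Qed.
Lemma ReB (a b : C) : Re (a - b) = Re a - Re b.
Proof. by case: a => ? ?; case: b. Qed.
Lemma ImB (a b : C) : Im (a - b) = Im a - Im b.
Proof. by case: a => ? ?; case: b. Qed.
Lemma ReD (a b : C) : Re (a + b) = Re a + Re b.
Proof. by case: a => ? ?; case: b. Qed.

Variable d : nat.
Lemma ReqA (M S : 'M[C]_d) t v :
  Re (qf ((t%:C)%C *: (M - S)) v) = t * (Re (qf M v) - Re (qf S v)).
Proof. by rewrite /qf bfZm ReCM bfDm bfNm ReB. Qed.

Lemma ReqAA (M S : 'M[C]_d) t v :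
  Re (qf (((t%:C)%C *: (M - S)) *m ((t%:C)%C *: (M - S))) v) = t ^+ 2 * Re (qf ((M - S) ^+ 2) v).
Proof.
rewrite -scalemxAl -scalemxAr scalerA -rmorphM /qf bfZm ReCM expr2; congr (_ * Re _).
Qed.

Lemma Re_sum (I : Type) (r : seq I) (F : I -> C) : Re (\sum_(i <- r) F i) = \sum_(i <- r) Re (F i).
Proof.
elim: r => [|i r ih]; first by rewrite !big_nil.
by rewrite !big_cons ReD ih.
Qed.
Lemma ImD (a b : C) : Im (a + b) = Im a + Im b.
Proof. by case: a => ? ?; case: b. Qed.
Lemma Im_sum (I : Type) (r : seq I) (F : I -> C) : Im (\sum_(i <- r) F i) = \sum_(i <- r) Im (F i).
Proof.
elim: r => [|i r ih]; first by rewrite !big_nil.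
by rewrite !big_cons ImD ih.
Qed.
Lemma qfD (A B : 'M[C]_d) v : qf (A + B) v = qf A v + qf B v.
Proof. exact: bfDm. Qed.
Lemma qfN (A : 'M[C]_d) v : qf (- A) v = - qf A v.
Proof. exact: bfNm. Qed.
Lemma qfZ (A : 'M[C]_d) c v : qf (c *: A) v = c * qf A v.
Proof. exact: bfZm. Qed.
End Aux.

Local Notation Re := complex.Re.
Theorem lemmaB4 (R : realType) (dT : measure_display) (T : measurableType dT)
  (P : probability T R) (d : nat) (psi : R -> R)
  (Y : T -> 'M[R[i]]_d) (theta : R) (S : 'M[R[i]]_d) :
  (forall x : R, - ln (1 - x + x ^+ 2 / 2) <= psi x /\
                 psi x <= ln (1 + x + x ^+ 2 / 2)) ->
  (forall w, selfadj (Y w)) ->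
  (forall i j, measurable_fun setT (fun w => complex.Re (Y w i j)) /\
               measurable_fun setT (fun w => complex.Im (Y w i j))) ->
  (forall i j, P.-integrable setT (fun w => ((complex.Re (Y w i j)) ^+ 2)%:E) /\
               P.-integrable setT (fun w => ((complex.Im (Y w i j)) ^+ 2)%:E)) ->
  0 < theta ->
  selfadj S ->
  (forall i j,
     measurable_fun setT (fun w => complex.Re (fcalc psi (theta%:C%C *: (Y w - S)) i j)) /\
     measurable_fun setT (fun w => complex.Im (fcalc psi (theta%:C%C *: (Y w - S)) i j))) ->
  opnorm (S - mexpect P Y
          + theta^-1%:C%C *: mexpect P (fun w => fcalc psi (theta%:C%C *: (Y w - S))))
  <= theta / 2 * opnorm (mexpect P (fun w => (Y w - S) ^+ 2)).
Proof.
move=> hpsi hY hmeas hint th0 hS hmF.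
have hf := psi_bounds hpsi.
pose F := fun w => fcalc psi (theta%:C%C *: (Y w - S)).
pose Q := fun w => (Y w - S) ^+ 2.
have hSe : adjmx S = S by [].
have hA : forall w, selfadj (theta%:C%C *: (Y w - S)).
  move=> w; have hYw : adjmx (Y w) = Y w by apply: hY.
  by rewrite /selfadj adjmxZ conjreal adjmxD adjmxN hYw hSe.
have L2Y : forall i j, L2 P (fun w => complex.Re (Y w i j)) /\ L2 P (fun w => complex.Im (Y w i j)).
  by move=> i j; have [m1 m2] := hmeas i j; have [i1 i2] := hint i j.
have IY : IntM P Y by move=> i j; have [l1 l2] := L2Y i j; split; apply: L2_Int.
have L2D : forall i j, L2 P (fun w => complex.Re ((Y w - S) i j)) /\ L2 P (fun w => complex.Im ((Y w - S) i j)).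
  move=> i j; have [l1 l2] := L2Y i j; split.
    have := L2B l1 (L2_cst P (complex.Re (S i j))).
    by case=> m1 m2; split; [apply: eq_measurable_fun m1 => w _ | apply: Int_ext m2 => w]; rewrite !mxE ReB.
  have := L2B l2 (L2_cst P (complex.Im (S i j))).
  by case=> m1 m2; split; [apply: eq_measurable_fun m1 => w _ | apply: Int_ext m2 => w]; rewrite !mxE ImB.
have IQ : IntM P Q.
  move=> i j; split.
    apply: (Int_ext (f := fun w => \sum_k (complex.Re ((Y w - S) i k) * complex.Re ((Y w - S) k j)
                         - complex.Im ((Y w - S) i k) * complex.Im ((Y w - S) k j)))).
      by move=> w; rewrite /Q expr2 [in RHS]mxE Re_sum; apply: eq_bigr => k _; rewrite ReM.
    apply: Int_sum => k; have [a1 a2] := L2D i k; have [b1 b2] := L2D k j.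
    by apply: IntB; apply: L2_mul.
  apply: (Int_ext (f := fun w => \sum_k (complex.Re ((Y w - S) i k) * complex.Im ((Y w - S) k j)
                       + complex.Im ((Y w - S) i k) * complex.Re ((Y w - S) k j)))).
    by move=> w; rewrite /Q expr2 [in RHS]mxE Im_sum; apply: eq_bigr => k _; rewrite ImM.
  apply: Int_sum => k; have [a1 a2] := L2D i k; have [b1 b2] := L2D k j.
  by apply: IntD; apply: L2_mul.
have hYe : forall w, adjmx (Y w) = Y w by move=> w; apply: hY.
have bnd : forall v w,
   theta * (Re (qf (Y w) v) - Re (qf S v)) - theta ^+ 2 / 2 * Re (qf (Q w) v) <= Re (qf (F w) v) <=
   theta * (Re (qf (Y w) v) - Re (qf S v)) + theta ^+ 2 / 2 * Re (qf (Q w) v).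
  move=> v w; have [_ _ h1 h2] := @pw _ _ psi _ v (hA w) hf.
  rewrite ReqA ReqAA in h1 h2; apply/andP; split; rewrite /F /Q; lra.
have hadjF : forall w, adjmx (F w) = F w.
  by move=> w; have [_ h _ _] := @pw _ _ psi _ 0 (hA w) hf.
have IRY : forall v, Int P (fun w => Re (qf (Y w) v)) by move=> v; apply: Int_Req.
have IRQ : forall v, Int P (fun w => Re (qf (Q w) v)) by move=> v; apply: Int_Req.
have IG1 : forall v, Int P (fun w => theta * (Re (qf (Y w) v) - Re (qf S v)) - theta ^+ 2 / 2 * Re (qf (Q w) v)).
  by move=> v; apply: IntB; apply: IntZ => //; apply: IntB => //; apply: Int_cst.
have IG2 : forall v, Int P (fun w => theta * (Re (qf (Y w) v) - Re (qf S v)) + theta ^+ 2 / 2 * Re (qf (Q w) v)).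
  by move=> v; apply: IntD; apply: IntZ => //; apply: IntB => //; apply: Int_cst.
have IRF : forall v, Int P (fun w => Re (qf (F w) v)).
  by move=> v; apply: (Int_sand (Meas_Req v hmF) (IG1 v) (IG2 v)) => w; apply: bnd.
have IF : IntM P F by apply: IntM_from_qf.
change (opnorm (S - mexpect P Y + theta^-1%:C%C *: mexpect P F) <= theta / 2 * opnorm (mexpect P Q)).
apply: final_det.
- by apply: divr_ge0 => //; exact: ltW.
- by rewrite !adjmxD adjmxN adjmxZ conjreal (adj_mexpect IY hYe) (adj_mexpect IF hadjF) hSe.
move=> x.
rewrite !qfD qfN qfZ ReD ReB ReCM !Re_qf_E //.
set qS := Re (qf S x).
set EY := Ef P (fun w => Re (qf (Y w) x)).
set EQ := Ef P (fun w => Re (qf (Q w) x)).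
set EF := Ef P (fun w => Re (qf (F w) x)).
have ic : Int P (fun _ => qS) by apply: Int_cst.
have i1 : Int P (fun w => Re (qf (Y w) x) - qS) by apply: IntB.
have i2 : Int P (fun w => theta * (Re (qf (Y w) x) - qS)) by apply: IntZ.
have i3 : Int P (fun w => theta ^+ 2 / 2 * Re (qf (Q w) x)) by apply: IntZ.
have eE : Ef P (fun w => theta * (Re (qf (Y w) x) - qS)) = theta * (EY - qS).
  by rewrite (EfZ _ i1) (EfB (IRY x) ic) Ef_cst.
have eQ : Ef P (fun w => theta ^+ 2 / 2 * Re (qf (Q w) x)) = theta ^+ 2 / 2 * EQ.
  by rewrite (EfZ _ (IRQ x)).
have up : EF <= theta * (EY - qS) + theta ^+ 2 / 2 * EQ.
  apply: le_trans (Ef_le (IRF x) (IG2 x) (fun w => proj2 (andP (bnd x w)))) _.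
  by rewrite (EfD i2 i3) eE eQ.
have lo : theta * (EY - qS) - theta ^+ 2 / 2 * EQ <= EF.
  apply: le_trans (Ef_le (IG1 x) (IRF x) (fun w => proj1 (andP (bnd x w)))).
  by rewrite (EfB i2 i3) eE eQ.
have ti : 0 <= theta^-1 by rewrite invr_ge0 ltW.
have k1 := ler_wpM2l ti up; have k2 := ler_wpM2l ti lo.
have e1 : theta^-1 * (theta * (EY - qS) + theta ^+ 2 / 2 * EQ) = (EY - qS) + theta / 2 * EQ.
  by field; rewrite gt_eqF.
have e2 : theta^-1 * (theta * (EY - qS) - theta ^+ 2 / 2 * EQ) = (EY - qS) - theta / 2 * EQ.
  by field; rewrite gt_eqF.
rewrite e1 in k1; rewrite e2 in k2.
rewrite ler_norml; apply/andP; split; lra.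
Qed.
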